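(* For every $d\ge1$, $H_d\le d!$.
   Context: A sublattice $\Lambda'$ of a $d$-dimensional lattice $\Lambda$ is hollow if it is generated by $d$ linearly independent elements $v_1,\dots,v_d\in\Lambda$ such that the interior of the convex hull of $\pm v_1,\dots,\pm v_d$ contains no nonzero element of $\Lambda$. $H_d$ denotes the maximal index $[\Lambda:\Lambda']$ of a hollow sublattice $\Lambda'$ of a $d$-dimensional lattice $\Lambda$. *)

(* Defs.v *)
From HB Require Import structures.
From mathcomp Require Import all_boot all_order all_algebra.
Set Implicit Arguments. Unset Strict Implicit. Unset Printing Implicit Defensive.
Import Order.TTheory GRing.Theory Num.Theory.
Local Open Scope ring_scope.

Definition in_lattice (R : realFieldType) (d : nat) (B : 'M[R]_d)
  (x : 'rV[R]_d) : Prop :=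
  exists z : 'rV[int]_d, x = map_mx (fun k : int => k%:~R) z *m B.

Definition in_span_int (R : realFieldType) (d : nat) (v : 'I_d -> 'rV[R]_d)
  (x : 'rV[R]_d) : Prop :=
  exists c : 'I_d -> int, x = \sum_(i < d) (c i)%:~R *: v i.

Definition in_sym_hull (R : realFieldType) (d : nat) (v : 'I_d -> 'rV[R]_d)
  (x : 'rV[R]_d) : Prop :=
  exists a b : 'I_d -> R,
    (forall i, 0 <= a i) /\ (forall i, 0 <= b i) /\
    \sum_(i < d) a i + \sum_(i < d) b i = 1 /\
    x = \sum_(i < d) a i *: v i + \sum_(i < d) b i *: (- v i).

Definition in_interior (R : realFieldType) (d : nat) (S : 'rV[R]_d -> Prop)
  (x : 'rV[R]_d) : Prop :=
  exists2 e : R, 0 < e &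
    forall y : 'rV[R]_d, (forall j, `|y 0 j - x 0 j| < e) -> S y.

(* Main.v *)
Require Import Defs.
From HB Require Import structures.
From mathcomp Require Import all_boot all_order all_algebra.
From mathcomp Require Import zify ring lra.
Import Order.TTheory GRing.Theory Num.Theory.
Local Open Scope ring_scope.

Lemma sum_scale_rows (R : realFieldType) (d : nat) (v : 'I_d -> 'rV[R]_d) (a : 'I_d -> R) :
  \sum_(i < d) a i *: v i = (\row_i a i) *m \matrix_(i < d) v i.
Proof. by rewrite mulmx_sum_row; apply: eq_bigr => i _; rewrite rowK mxE. Qed.

Lemma sym_sum (R : realFieldType) (d : nat) (v : 'I_d -> 'rV[R]_d) (f g : 'I_d -> R) :
  \sum_(i < d) f i *: v i + \sum_(i < d) g i *: - v i = (\row_i (f i - g i)) *m \matrix_(i < d) v i.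
Proof.
rewrite -sum_scale_rows -big_split /=; apply: eq_bigr => i _.
by rewrite scalerN scalerBl.
Qed.

Lemma hull_lem (R : realFieldType) (d : nat) (hd : (0 < d)%N) (v : 'I_d -> 'rV[R]_d)
  (a : 'rV[R]_d) : \sum_l `|a 0 l| <= 1 -> in_sym_hull v (a *m \matrix_(i < d) v i).
Proof.
move=> ha.
set t := (1 - \sum_l `|a 0 l|) / (d%:R *+ 2).
have hd' : 0 < d%:R :> R by rewrite ltr0n.
have ht : 0 <= t by apply: divr_ge0; [rewrite subr_ge0 | rewrite mulrn_wge0 // ltW].
exists (fun i => (`|a 0 i| + a 0 i) / 2 + t), (fun i => (`|a 0 i| - a 0 i) / 2 + t).
split; [|split; [|split]].
- move=> i; apply: addr_ge0 => //; apply: divr_ge0 => //.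
  by rewrite -lerBlDr sub0r ler_normr lexx orbT.
- move=> i; apply: addr_ge0 => //; apply: divr_ge0 => //.
  by rewrite subr_ge0 ler_norm.
- rewrite !big_split /= !sumr_const card_ord.
  have e : \sum_(i < d) ((`|a 0 i| + a 0 i) / 2) + \sum_(i < d) ((`|a 0 i| - a 0 i) / 2) = \sum_l `|a 0 l|.
    by rewrite -big_split /=; apply: eq_bigr => i _; field.
  have e2 : t *+ d + t *+ d = 1 - \sum_l `|a 0 l|.
    rewrite -mulrnDr -[t *+ _]mulr_natr /t natrD mulr2n; field.
    by rewrite -natrD pnatr_eq0 addn_eq0 andbb; move: hd; rewrite lt0n.
  move: e e2; set X := \sum_(i < d) _; set Y := \sum_(i < d) _; set Z := t *+ d; lra.
- rewrite (@sym_sum _ _ v (fun i => (`|a 0 i| + a 0 i) / 2 + t) (fun i => (`|a 0 i| - a 0 i) / 2 + t)).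
  by congr (_ *m _); apply/rowP => j; rewrite mxE; field.
Qed.

Lemma interior_lem (R : realFieldType) (d : nat) (hd : (0 < d)%N) (v : 'I_d -> 'rV[R]_d)
  (hV : \matrix_(i < d) v i \in unitmx) (a : 'rV[R]_d) :
  \sum_l `|a 0 l| < 1 -> in_interior (in_sym_hull v) (a *m \matrix_(i < d) v i).
Proof.
move=> ha; set V := \matrix_(i < d) v i; set Vi := invmx V.
set S := \sum_(l < d) \sum_(j < d) `|Vi j l|.
have hS : 0 <= S by apply: sumr_ge0 => l _; apply: sumr_ge0.
set q := 1 - \sum_l `|a 0 l|.
have hq : 0 < q by rewrite /q subr_gt0.
set e := q / (1 + S).
have he : 0 < e by apply: divr_gt0 => //; lra.
have heS : e * S <= q.
  rewrite /e mulrAC ler_pdivrMr; last by lra.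
  nra.
exists e => // y hy.
have -> : y = (y *m Vi) *m V by rewrite mulmxKV.
apply: hull_lem => //.
set z := y - a *m V.
have ey : y *m Vi = a + z *m Vi by rewrite /z mulmxBl mulmxK // addrC subrK.
have hz j : `|z 0 j| <= e.
  have -> : z 0 j = y 0 j - (a *m V) 0 j by rewrite /z !mxE.
  exact: ltW (hy j).
have hl l : `|(y *m Vi) 0 l| <= `|a 0 l| + e * \sum_(j < d) `|Vi j l|.
  rewrite ey !mxE; apply: le_trans (ler_normD _ _) _; rewrite lerD2l.
  rewrite mulr_sumr; apply: le_trans (ler_norm_sum _ _ _) _.
  apply: ler_sum => j _; rewrite normrM; apply: ler_wpM2r => //.
apply: le_trans (ler_sum _ (fun l _ => hl l)) _.
rewrite big_split /= -mulr_sumr -/S; move: heS; rewrite /q; lra.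
Qed.

Module CombM.
Local Close Scope ring_scope.
Set Implicit Arguments. Unset Strict Implicit.

Definition Es r (A : {set 'I_r}) : seq nat := [seq val x | x <- enum A].

Lemma Es_sorted r (A : {set 'I_r}) : sorted ltn (Es A).
Proof.
apply: (subseq_sorted ltn_trans (s2 := iota 0 r)); last exact: iota_ltn_sorted.
rewrite -val_enum_ord /Es; apply: map_subseq.
rewrite /enum_mem -enumT [X in subseq _ X](eq_filter (a2 := predT)) // filter_predT; exact: filter_subseq.
Qed.

Lemma Es_size r (A : {set 'I_r}) : size (Es A) = #|A|.
Proof. by rewrite size_map cardE. Qed.

Lemma Es_lt r (A : {set 'I_r}) j : (j < #|A|)%N -> (nth 0%N (Es A) j < r)%N.
Proof.
move=> hj; have : nth 0%N (Es A) j \in Es A by rewrite mem_nth // Es_size.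
rewrite /Es. move=> /mapP. case=> x _ ->. exact: ltn_ord.
Qed.

Definition G r (A : {set 'I_r}) (j : nat) : int :=
  if j is j'.+1 then (nth 0%N (Es A) j')%:Z else (-1)%R.
Definition P r (A : {set 'I_r}) (l : nat) : int := (G A l.+1 - G A l)%R.

Lemma P_ge1 r (A : {set 'I_r}) l : (l < #|A|)%N -> (1 <= P A l)%R.
Proof.
rewrite /P; case: l => [|j] hj /=.
  by rewrite opprK lerDr.
have := @sorted_ltn_nth _ ltn ltn_trans 0%N (Es A) (Es_sorted A) j j.+1.
rewrite !inE Es_size (ltn_trans _ hj) // hj => /(_ isT isT (ltnSn j)) h.
rewrite lerBrDr; move: h; rewrite /ltn /=; lia.
Qed.

Lemma P_sum r (A : {set 'I_r}) d : #|A| = d.+1 -> (\sum_(l < d.+1) P A l <= r%:Z)%R.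
Proof.
move=> hA; rewrite -(big_mkord xpredT (P A)).
rewrite (telescope_sumr (fun k => G A k)) //=.
have : (nth 0%N (Es A) d < r)%N by apply: Es_lt; rewrite hA.
lia.
Qed.

Definition kv d r (s : {ffun 'I_d -> bool}) (A : {set 'I_r}) (l : 'I_d) : int :=
  if s l then P A l else (- P A l)%R.

Lemma kv_abs d r s (A : {set 'I_r}) (l : 'I_d) : #|A| = d -> `|kv s A l|%R = P A l.
Proof.
move=> hA; have h : (1 <= P A l)%R by apply: P_ge1; rewrite hA ltn_ord.
have h0 : (0 <= P A l)%R by apply: le_trans h.
by rewrite /kv; case: (s l); rewrite ?normrN ger0_norm.
Qed.

Lemma kv_inj d r (s s' : {ffun 'I_d -> bool}) (A A' : {set 'I_r}) : #|A| = d -> #|A'| = d ->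
  (forall l, kv s A l = kv s' A' l) -> s = s' /\ A = A'.
Proof.
move=> hA hA' hk.
have h1 (l : 'I_d) : (1 <= P A l)%R by apply: P_ge1; rewrite hA ltn_ord.
have h1' (l : 'I_d) : (1 <= P A' l)%R by apply: P_ge1; rewrite hA' ltn_ord.
have es : s = s'.
  apply/ffunP=> l; have := hk l; rewrite /kv.
  have := h1 l; have := h1' l.
  by case: (s l); case: (s' l) => // a b; lia.
split=> //; subst s'.
have hP (l : 'I_d) : P A l = P A' l.
  by have := hk l; rewrite /kv; case: (s l) => // /oppr_inj.
have hG j : (j <= d)%N -> G A j = G A' j.
  elim: j => [|j IH] hj //.
  have := hP (Ordinal hj); rewrite /P /= IH ?(ltnW hj) //.
  by move/addIr.
have eE : Es A = Es A'.
  apply: (@eq_from_nth _ 0%N); first by rewrite !Es_size hA hA'.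
  move=> j; rewrite Es_size hA => hj.
  by have := hG j.+1 hj => /= [[]].
have : enum A = enum A' by apply: (inj_map val_inj).
by move=> e; rewrite -(set_enum A) -(set_enum A') e.
Qed.

Lemma modz_lt (K : nat) (z : int) : (0 < K)%N -> (absz (z %% (Posz K))%Z < K)%N.
Proof.
move=> hK; have h1 := @ltz_pmod z (Posz K); have h2 := @modz_ge0 z (Posz K).
rewrite ltz_nat hK in h1 h2; have {h1} h1 := h1 isT.
have {h2} h2 : (0 <= (z %% (Posz K))%Z)%R by apply: h2; lia.
lia.
Qed.

Definition md (K : nat) (hK : (0 < K)%N) (z : int) : 'I_K := Ordinal (modz_lt z hK).

Lemma md_eq K hK a b : @md K hK a = md hK b -> (a - b = ((a - b)%R %/ (Posz K))%Z * (Posz K))%R.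
Proof.
move=> /(congr1 val) /= e.
have hK' : (Posz K) != 0%R by rewrite eqz_nat -lt0n.
have e' : (a %% (Posz K))%Z = (b %% (Posz K))%Z.
  by rewrite -(gez0_abs (modz_ge0 a hK')) -(gez0_abs (modz_ge0 b hK')) e.
have : ((Posz K) %| (a - b)%R)%Z by rewrite -eqz_mod_dvd e'.
by move/divzK.
Qed.

Lemma ffact_low m n : ((n.+1 - m) ^ m <= n ^_ m)%N.
Proof.
elim: m n => [|m IH] n; first by rewrite ffactn0 expn0.
rewrite ffactnS expnS; case: n => [|n] /=; first by rewrite subSS sub0n mul0n.
apply: leq_mul; first by rewrite subSS leq_subr.
by have := IH n; rewrite subSS.
Qed.

Lemma pw b c n : ((b + c) ^ n.+1 <= b ^ n.+1 + n.+1 * c * (b + c) ^ n)%N.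
Proof.
elim: n => [|n IH]; first by rewrite !expn1 expn0 mul1n muln1.
rewrite (expnS _ n.+1) (leq_trans (leq_mul (leqnn (b + c)) IH)) //.
rewrite mulnDr (expnS b n.+1) mulnDl.
have : (b ^ n.+1 <= (b + c) ^ n.+1)%N by rewrite leq_exp2r // leq_addr.
rewrite (expnS (b + c) n); set y := (b ^ n.+1)%N; set x := ((b + c) ^ n)%N.
move=> h; have := leq_mul (leqnn c) h. nia.
Qed.

Lemma expn_mono m n e : (m <= n)%N -> (m ^ e <= n ^ e)%N.
Proof. by move=> h; elim: e => [|e IH] //; rewrite !expnS leq_mul. Qed.

Definition bigM d := (2 * d * d * d`! * 2 ^ d + 4 * d + 1)%N.

Lemma arith d N K r : (0 < d)%N -> (K <= 2 * r + 2)%N -> (bigM d <= K)%N ->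
  (N * 2 ^ d * 'C(r, d) <= K ^ d)%N -> (N <= d`!)%N.
Proof.
case: d => // n _ hKr hM hN.
set d := n.+1 in hKr hM hN *.
rewrite leqNgt; apply/negP => hlt.
have hf : (0 < d`!)%N := fact_gt0 d.
have h1 : ((d`! + 1) * 2 ^ d * 'C(r, d) <= K ^ d)%N.
  apply: leq_trans hN; rewrite leq_mul2r leq_mul2r; apply/orP; right; apply/orP; right.
  by rewrite addn1.
have h2 : ((d`! + 1) * 2 ^ d * (r.+1 - d) ^ d <= d`! * K ^ d)%N.
  apply: leq_trans (_ : d`! * ((d`! + 1) * 2 ^ d * 'C(r, d)) <= _)%N; last by rewrite leq_mul2l h1 orbT.
  have -> : (d`! * ((d`! + 1) * 2 ^ d * 'C(r, d)) = (d`! + 1) * 2 ^ d * r ^_ d)%N.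
    by rewrite -bin_ffact; set x := 'C(r, d); set y := d`!; set z := (2 ^ d)%N; lia.
  by rewrite leq_mul2l ffact_low orbT.
set c := (2 * d)%N.
set b := (K - c)%N.
have hbc : (c < b)%N by rewrite /b /c; move: hM; rewrite /bigM; lia.
have h3 : (b ^ d <= (2 * (r.+1 - d)) ^ d)%N.
  by apply: expn_mono; rewrite /b /c; move: hKr; lia.
rewrite expnMn in h3.
have h4 : ((d`! + 1) * b ^ d <= d`! * (b + c) ^ d)%N.
  have -> : (b + c = K)%N by rewrite /b /c; move: hM; rewrite /bigM; lia.
  apply: (leq_trans _ h2).
  rewrite -mulnA leq_mul2l h3 orbT //.
have h5 := pw b c n.
have h6 : ((b + c) ^ n <= 2 ^ n * b ^ n)%N.
  rewrite -expnMn; apply: expn_mono; lia.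
have hbn : (0 < b ^ n)%N by rewrite expn_gt0; apply/orP; left; lia.
have h7 : (b * b ^ n <= d`! * d * c * 2 ^ n * b ^ n)%N.
  rewrite -expnS; move: h4 h5 h6; rewrite -/d.
  set X := (b ^ d)%N; set Y := ((b + c) ^ n)%N; set Z := (b ^ n)%N; set W := ((b + c) ^ d)%N.
  set f := d`!; set t := (2 ^ n)%N => h4 h5 h6.
  have h8 : (X <= f * (d * c * Y))%N.
    have : ((f + 1) * X <= f * X + f * (d * c * Y))%N.
      by apply: leq_trans h4 _; rewrite -mulnDr leq_mul2l h5 orbT.
    lia.
  apply: leq_trans h8 _.
  have := leq_mul (leqnn (f * d * c)) h6; rewrite !mulnA; lia.
rewrite leq_mul2r in h7; move: h7 => /orP [|h7]; first by move: hbn; lia.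
move: hM h7; rewrite /bigM /b /c /d expnS.
set f := d`!; set t := (2 ^ n)%N.
have -> : (2 * n.+1 * n.+1 * f * (2 * t) = 2 * (f * n.+1 * (2 * n.+1) * t))%N.
  by ring.
set P := (f * n.+1 * (2 * n.+1) * t)%N; clearbody P; move=> hM1 h71; clear -hM1 h71; lia.
Qed.

Lemma comb (d N D : nat) (u : 'I_N -> 'I_d -> int) : (0 < d)%N -> (0 < D)%N ->
  (forall i j : 'I_N, i != j -> forall c : 'I_d -> int,
     (Posz D <= \sum_(l < d) `|u i l - u j l + Posz D * c l|)%R) -> (N <= d`!)%N.
Proof.
move=> hd hD.
case: d hd u => // d _ u hu.
set m := bigM d.+1.
have hm : (0 < m)%N by rewrite /m /bigM addn1.
set K := (m * D)%N.
have hK : (0 < K)%N by rewrite muln_gt0 hm hD.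
set r := (K.-1)./2.
have hKr : (2 * r < K)%N.
  have := odd_double_half K.-1; rewrite -/r -mul2n; lia.
pose F (x : ('I_N * {ffun 'I_d.+1 -> bool}) * {set 'I_r}) : {ffun 'I_d.+1 -> 'I_K} :=
  [ffun l => md hK (Posz m * u x.1.1 l + kv x.1.2 x.2 l)%R].
pose Dom := [set x : ('I_N * {ffun 'I_d.+1 -> bool}) * {set 'I_r} | #|x.2| == d.+1].
have hsum (s : {ffun 'I_d.+1 -> bool}) (A : {set 'I_r}) : #|A| = d.+1 ->
    (\sum_l `|kv s A l| <= Posz r)%R.
  move=> hA; rewrite (eq_bigr (fun l : 'I_d.+1 => P A l)); first exact: P_sum.
  by move=> l _; rewrite kv_abs.
have hone (s : {ffun 'I_d.+1 -> bool}) (A : {set 'I_r}) l : #|A| = d.+1 ->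
    (`|kv s A l| <= Posz r)%R.
  move=> hA; apply: le_trans (hsum s A hA).
  rewrite (bigD1 l) //= lerDl; exact: sumr_ge0.
have hinj : {in Dom &, injective F}.
  move=> [[i s] A] [[j s'] A']; rewrite !inE /= => /eqP hA /eqP hA' eF.
  set c := fun l => (((Posz m * u i l + kv s A l)%R - (Posz m * u j l + kv s' A' l)%R)%R %/ Posz K)%Z.
  have hc l : ((Posz m * u i l + kv s A l) - (Posz m * u j l + kv s' A' l) = c l * Posz K)%R.
    by apply: (md_eq (hK := hK)); move/ffunP: eF => /(_ l); rewrite !ffunE.
  case: (eqVneq i j) => [eij | nij]; last first.
    exfalso.
    have h := hu i j nij (fun l => - c l)%R.
    have e1 : (Posz m * \sum_l `|u i l - u j l + Posz D * - c l| = \sum_l `|kv s' A' l - kv s A l|)%R.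
      rewrite mulr_sumr; apply: eq_bigr => l _.
      rewrite -(@ger0_norm _ (Posz m)) // -normrM; congr `|_|%R.
      have := hc l; rewrite /K PoszM; nia.
    have e2 : (\sum_l `|kv s' A' l - kv s A l| <= Posz r + Posz r)%R.
      apply: (@le_trans _ _ (\sum_l (`|kv s' A' l| + `|kv s A l|))%R).
        apply: ler_sum => l _; exact: ler_normB.
      rewrite big_split /=; apply: lerD; exact: hsum.
    have e3 : (Posz m * Posz D <= Posz m * \sum_l `|u i l - u j l + Posz D * - c l|)%R.
      by apply: ler_wpM2l.
    move: e1 e2 e3 hKr; rewrite /K; lia.
  subst j.
  have ek l : kv s A l = kv s' A' l.
    have h1 := hc l; have := hone s A l hA; have := hone s' A' l hA'.
    have hKr' := hKr; rewrite /K in hKr' h1 *; rewrite PoszM in h1.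
    case: (eqVneq (c l) 0%R) => [c0|cn0].
      rewrite c0 mul0r in h1; lia.
    nia.
  by have [-> ->] := kv_inj hA hA' ek.
have hc := @leq_card_in _ _ F (mem Dom) hinj.
rewrite card_ffun !card_ord in hc.
have cD : #|Dom| = (N * 2 ^ d.+1 * 'C(r, d.+1))%N.
  have -> : Dom = setX [set: 'I_N * {ffun 'I_d.+1 -> bool}] [set A : {set 'I_r} | #|A| == d.+1].
    by apply/setP => -[x A]; rewrite !inE.
  by rewrite cardsX cardsT card_prod card_ffun card_bool !card_ord card_draws card_ord.
rewrite cD in hc.
apply: (arith (K := K) (r := r)) => //.
- move: hKr; lia.
- by rewrite /K leq_pmulr.
Qed.

End CombM.

Theorem proposition11p2 (R : realFieldType) (d : nat) (hd : (1 <= d)%N)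
  (B : 'M[R]_d) (hB : B \in unitmx)
  (v : 'I_d -> 'rV[R]_d)
  (hvL : forall i, in_lattice B (v i))
  (hfree : row_free (\matrix_(i < d) v i))
  (hhollow : forall x, in_lattice B x -> x != 0 ->
                ~ in_interior (in_sym_hull v) x)
  (s : seq 'rV[R]_d)
  (hsL : forall x, x \in s -> in_lattice B x)
  (hinc : forall i j, (i < size s)%N -> (j < size s)%N -> i <> j ->
            ~ in_span_int v (nth 0 s i - nth 0 s j)) :
  (size s <= d`!)%N.
Proof.
set V := \matrix_(i < d) v i.
have hVu : V \in unitmx by rewrite -row_free_unit.
have [Zf hZf] := fin_all_exists hvL.
set Z := \matrix_(i < d) Zf i.
have hVZ : V = map_mx (fun k : int => k%:~R) Z *m B.
  by apply/row_matrixP => i; rewrite row_mul -map_row !rowK hZf.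
set δ := \det Z.
have hδ : δ != 0.
  have : \det V != 0 by rewrite -unitfE -unitmxE.
  rewrite hVZ det_mulmx det_map_mx -/δ; apply: contra => /eqP ->.
  by rewrite mul0r.
have hsL' : forall i : 'I_(size s), in_lattice B (nth 0 s i).
  by move=> i; apply: hsL; rewrite mem_nth.
have [zs hzs] := fin_all_exists hsL'.
have key i : map_mx (fun k : int => k%:~R) (zs i *m \adj Z) *m V = δ%:~R *: nth 0 s i.
  rewrite hVZ mulmxA -map_mxM -mulmxA mul_adj_mx mul_mx_scalar map_mxZ.
  by rewrite -scalemxAl -hzs.
apply: (@CombM.comb d (size s) `|δ|%N (fun i l => (zs i *m \adj Z) 0 l)) => //.
  by rewrite absz_gt0.
move=> i j nij c; rewrite leNgt; apply/negP => hlt.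
set e := fun l => Num.sg δ * c l.
have eD l : Posz `|δ|%N * c l = δ * e l.
  by rewrite abszE normrEsg /e mulrCA mulrA.
set erow := \row_l e l.
set w := (zs i - zs j) *m \adj Z + δ *: erow.
have hw l : w 0 l = (zs i *m \adj Z) 0 l - (zs j *m \adj Z) 0 l + Posz `|δ|%N * c l.
  by rewrite eD /w mulmxBl !mxE.
set ar := (δ%:~R : R)^-1 *: map_mx (fun k : int => k%:~R) w.
have hδR : (δ%:~R : R) != 0 by rewrite intr_eq0.
have hsum : \sum_l `|ar 0 l| < 1.
  have -> : \sum_l `|ar 0 l| = (\sum_l `|w 0 l|)%:~R / `|δ|%:~R.
    rewrite rmorph_sum /= mulr_suml; apply: eq_bigr => l _.
    by rewrite /ar !mxE normrM normfV -!intr_norm mulrC.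
  rewrite ltr_pdivrMr ?ltr0z ?normr_gt0 // mul1r ltr_int.
  by rewrite (eq_bigr _ (fun l _ => congr1 _ (hw l))) -abszE.
have har : ar *m V = nth 0 s i - nth 0 s j + map_mx (fun k : int => k%:~R) erow *m V.
  rewrite /ar -scalemxAl /w mulmxBl map_mxD map_mxB mulmxDl mulmxBl !key map_mxZ -scalemxAl.
  by rewrite !scalerDr scalerN !scalerA mulVf // !scale1r.
set y := nth 0 s i - nth 0 s j + map_mx (fun k : int => k%:~R) erow *m V.
have hyL : in_lattice B y.
  exists (zs i - zs j + erow *m Z).
  by rewrite map_mxD map_mxB map_mxM mulmxDl mulmxBl -!hzs -mulmxA -hVZ.
case: (eqVneq y 0) => [y0 | yn0].
  apply: (hinc i j (ltn_ord i) (ltn_ord j)).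
    by move=> /val_inj h; rewrite h eqxx in nij.
  exists (fun l => - e l); rewrite sum_scale_rows.
  have e1 : nth 0 s i - nth 0 s j = - (map_mx (fun k : int => k%:~R) erow *m V).
    by apply/eqP; rewrite -addr_eq0; apply/eqP.
  rewrite e1 -mulNmx; congr (_ *m _); apply/rowP => l; rewrite !mxE.
  by rewrite mulrNz.
apply: (hhollow y hyL yn0); rewrite /y -har; exact: interior_lem.
Qed.
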